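(* Let $q$ be a power of $2$, let $f\in\mathbb{F}_q[x]$ be monic of degree $m\ge1$, and let $h(x)=x^mf(x+x^{-1})$. Then $1$ is a root of $h$ if and only if $f(0)=0$, and in that case this root of $h$ has multiplicity two if and only if $0$ has multiplicity one as a root of $f$. All roots of $h$ different from $1$ are simple if and only if all roots of $f$ different from $0$ are simple. *)

(* Defs.v *)
From mathcomp Require Import all_boot all_order all_algebra all_field.
Set Implicit Arguments. Unset Strict Implicit. Unset Printing Implicit Defensive.
Import GRing.Theory.
Local Open Scope ring_scope.

(* h(x) = x^m f(x + x^{-1}) with m = deg f, written as a polynomial:
   x^m * sum_i f_i (x + 1/x)^i = sum_i f_i x^(m-i) (x^2+1)^i. *)
Definition recip_transform (F : fieldType) (f : {poly F}) : {poly F} :=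
  \sum_(i < size f) f`_i *: ('X^((size f).-1 - i) * ('X^2 + 1) ^+ i).

(* Main.v *)
Require Import Defs.
From mathcomp Require Import all_boot all_order all_algebra all_field.
Import GRing.Theory.
Local Open Scope ring_scope.
From mathcomp Require Import zify ring.

Section S.
Variable K : fieldType.
Definition AA : {poly K} := 'X^2 + 1.
Definition TT n (p : {poly K}) := \sum_(i < n.+1) p`_i *: ('X^(n - i) * AA^+i).

Lemma TT_mulXsubC n (p : {poly K}) (c : K) : (size p <= n.+1)%N ->
  TT n.+1 (p * ('X - c%:P)) = (AA - c *: 'X) * TT n p.
Proof.
move=> hs; rewrite /TT.
have e i : (p * ('X - c%:P))`_i = (p * 'X)`_i - c * p`_i.
  by rewrite mulrBr coefB coefMC [_ * c]mulrC.
under eq_bigr do rewrite e scalerBl.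
rewrite sumrB big_ord_recl coefMX eqxx scale0r add0r.
rewrite [X in _ - X]big_ord_recr /= [p`_n.+1]nth_default // mulr0 scale0r addr0.
rewrite mulrBl !mulr_sumr; congr (_ - _); apply: eq_bigr => i _.
  rewrite coefMX /= subSS exprS -scalerAr; congr (_ *: _).
  by rewrite mulrCA.
rewrite subSn ?leq_ord // exprS -scalerA -!scalerAl -scalerAr; congr (_ *: _).
by rewrite mulrA.
Qed.

Lemma TT_prod (r : seq K) :
  TT (size r) (\prod_(y <- r) ('X - y%:P)) = \prod_(y <- r) (AA - y *: 'X).
Proof.
elim: r => [|y r IH].
  rewrite !big_nil /TT big_ord_recl big_ord0 addr0 coefC /= expr0 mulr1 scale1r.
  by [].
rewrite !big_cons /= mulrC TT_mulXsubC ?size_prod_XsubC // IH mulrC.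
by [].
Qed.

Lemma TT_Xn n (g : {poly K}) k : (size g <= n.+1)%N ->
  TT (n + k) (g * 'X^k) = AA ^+ k * TT n g.
Proof.
move=> hs; elim: k => [|k IH]; first by rewrite addn0 !expr0 mulr1 mul1r.
have -> : 'X^(k.+1) = 'X^k * ('X - 0%:P) :> {poly K} by rewrite subr0 exprS mulrC.
rewrite addnS mulrA TT_mulXsubC ?IH ?scale0r ?subr0 ?exprS ?mulrA //.
apply: leq_trans (size_mul_leq _ _) _; rewrite size_polyXn; lia.
Qed.

Hypothesis hc : 2%N \in [pchar K].

Lemma TT_eval1 n (p : {poly K}) : (TT n p).[1] = p`_0.
Proof.
rewrite /TT horner_sum big_ord_recl big1 ?addr0.
  by rewrite hornerZ hornerM hornerXn expr0 hornerC expr1n !mulr1.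
move=> i _; rewrite hornerZ hornerM hornerXn expr1n horner_exp /AA !hornerE.
by rewrite expr1n -[1 + 1]/(2%:R : K) (pcharf0 hc) expr0n /= !mulr0.
Qed.

Lemma AA_sq : AA = ('X - 1) ^+ 2.
Proof.
rewrite sqrrB1 /AA -mulr_natr.
have -> : (2%:R : {poly K}) = 0 by rewrite -polyC_natr (pcharf0 hc).
by rewrite mulr0 subr0.
Qed.


Lemma sq1_pchar2 (z : K) : z * z = 1 -> z = 1.
Proof.
move=> h; apply/eqP; rewrite -subr_eq0.
have : (z - 1) ^+ 2 == 0.
  rewrite sqrrB1 -mulr_natr.
  by rewrite (pcharf0 hc) mulr0 subr0 expr2 h -[1 + 1]/(2%:R : K) (pcharf0 hc).
by rewrite expf_eq0.
Qed.

Lemma inv_neq (z : K) : z != 0 -> z != 1 -> z^-1 != z.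
Proof.
move=> z0 z1; apply/eqP => e; move/eqP: z1; apply; apply: sq1_pchar2.
by rewrite -{1}e mulVf.
Qed.

Lemma sizeQ (y : K) : size (AA - y *: 'X) = 3%N.
Proof.
rewrite /AA -addrA size_addl size_polyXn // (leq_ltn_trans (size_add _ _)) //.
rewrite size_poly1 size_opp gtn_max /=.
by rewrite (leq_ltn_trans (size_scale_leq _ _)) // size_polyX.
Qed.

Lemma Q_neq0 (y : K) : AA - y *: 'X != 0.
Proof. by rewrite -size_poly_eq0 sizeQ. Qed.

Lemma rootQ (y z : K) : z != 0 -> root (AA - y *: 'X) z = (y == z + z^-1).
Proof.
move=> z0; rewrite /root /AA !hornerE expr2.
apply/eqP/eqP => [h|->].
  have : y * z = z * z + 1 by apply/eqP; rewrite eq_sym -subr_eq0; apply/eqP; rewrite -h; ring.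
  move=> h2; apply: (mulIf z0); rewrite h2 mulrDl mulVf //.
rewrite mulrDl mulVf //; ring.
Qed.


Lemma mupQ (y z : K) : z != 0 -> z != 1 ->
  mup z (AA - y *: 'X) = (y == z + z^-1) :> nat.
Proof.
move=> z0 z1; have [e|ne] := eqVneq y (z + z^-1); last first.
  by rewrite mupNroot // rootQ // ne.
have -> : AA - y *: 'X = \prod_(w <- [:: z; z^-1]) ('X - w%:P).
  rewrite !big_cons big_nil mulr1 e /AA -mul_polyC polyCD.
  have hz : z%:P * z^-1%:P = 1 :> {poly K} by rewrite -polyCM mulfV.
  rewrite mulrBl !mulrBr [z%:P * 'X]mulrC hz; ring.
rewrite mu_prod_XsubC /= eqxx /=.
by rewrite (negbTE (inv_neq z z0 z1)).
Qed.

Lemma mup_prodQ (r : seq K) z : z != 0 -> z != 1 ->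
  mup z (\prod_(y <- r) (AA - y *: 'X)) = count_mem (z + z^-1) r.
Proof.
move=> z0 z1; elim: r => [|y r IH].
  by rewrite big_nil mupNroot // root1.
rewrite big_cons mupM ?Q_neq0 //; last first.
  by rewrite prodf_seq_neq0; apply/allP => x _; rewrite Q_neq0.
by rewrite mupQ // IH.
Qed.

Lemma prodQ_at0 (r : seq K) : (\prod_(y <- r) (AA - y *: 'X)).[0] = 1.
Proof.
rewrite horner_prod big1_seq // => y _.
by rewrite /AA !hornerE expr0n add0r subr0.
Qed.

Lemma root_mup (p : {poly K}) x : p != 0 -> root p x = (0 < mup x p)%N.
Proof. by move=> p0; rewrite -XsubC_dvd // dvdp_XsubCl. Qed.

Lemma recip_TT (f : {poly K}) : f != 0 -> recip_transform f = TT (size f).-1 f.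
Proof. by move=> f0; rewrite /TT prednK // lt0n size_poly_eq0. Qed.
End S.
Arguments AA {K}.
Arguments TT {K} n p.

Lemma map_TT (K L : fieldType) (iota : {rmorphism K -> L}) n (p : {poly K}) :
  map_poly iota (TT n p) = TT n (map_poly iota p).
Proof.
rewrite /TT rmorph_sum; apply: eq_bigr => i _.
rewrite /= map_polyZ rmorphM /= rmorphXn /= map_polyX rmorphXn /= /AA rmorphD /= map_polyXn rmorph1.
by rewrite coef_map.
Qed.

Theorem lemma2p12 (F : finFieldType) (hchar : 2%N \in [pchar F])
    (f : {poly F}) (hmon : f \is monic) (hdeg : (1 <= (size f).-1)%N) :
  let h := recip_transform f in
  (root h 1 <-> f.[0] = 0) /\
  (f.[0] = 0 -> (mup 1 h = 2%N <-> mup 0 f = 1%N)) /\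
  (forall (L : closedFieldType) (iota : {rmorphism F -> L}),
     (forall z : L, z != 1 -> root (map_poly iota h) z ->
        mup z (map_poly iota h) = 1%N) <->
     (forall y : L, y != 0 -> root (map_poly iota f) y ->
        mup y (map_poly iota f) = 1%N)).
Proof.
move=> h.
have f0 : f != 0 := monic_neq0 hmon.
have hT : h = TT (size f).-1 f := @recip_TT _ f f0.
split.
  rewrite /root hT TT_eval1 // horner_coef0.
  by split => [/eqP|->].
split.
  move=> _.
  have [k [g ng0 ef]] := multiplicity_XsubC f 0.
  rewrite f0 implyTb in ng0.
  have g0 : g != 0 by apply: contra_neq f0; rewrite ef => ->; rewrite mul0r.
  have mk : mup 0 f = k by rewrite ef mupMr // mup_XsubCX eqxx.
  have ef' : f = g * 'X^k by rewrite ef polyC0 subr0.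
  have hs : (size f).-1 = ((size g).-1 + k)%N.
    rewrite ef' size_mulXn //; have : (0 < size g)%N by rewrite lt0n size_poly_eq0.
    by case: (size g) => [|s] //= _; rewrite addnS /= addnC.
  rewrite mk hT hs ef' TT_Xn; last by rewrite leqSpred.
  rewrite (@AA_sq _ hchar) -exprM -polyC1 mupMl; last first.
    by rewrite /root TT_eval1 // -horner_coef0.
  rewrite mup_XsubCX eqxx; split; lia.
move=> L iota.
have hcL : 2%N \in [pchar L] := rmorph_pchar iota hchar.
have mL : map_poly iota f \is monic by rewrite map_monic.
have [r er] := closed_field_poly_normal (map_poly iota f).
rewrite (monicP mL) scale1r in er.
have sz : size r = (size f).-1.
  by rewrite -(size_map_poly iota f) er size_prod_XsubC.
have eh : map_poly iota h = \prod_(y <- r) (AA - y *: 'X).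
  by rewrite hT map_TT -sz er TT_prod.
rewrite eh er.
have P0 : \prod_(y <- r) (AA - y *: 'X) != 0 :> {poly L}.
  by rewrite prodf_seq_neq0; apply/allP => x _; rewrite Q_neq0.
have Q0 : \prod_(y <- r) ('X - y%:P) != 0 :> {poly L}.
  by rewrite monic_neq0 // monic_prod_XsubC.
split.
  move=> H y y0 ry.
  have [z rz] : exists z, root (AA - y *: 'X) z by apply/closed_rootP; rewrite sizeQ.
  have z0 : z != 0.
    apply: contraTneq rz => ->.
    by rewrite /root /AA !hornerE expr0n /= add0r subr0 oner_eq0.
  have ey : y = z + z^-1 by apply/eqP; rewrite -rootQ.
  have z1 : z != 1.
    apply/eqP => z1; move/eqP: y0; apply.
    by rewrite ey z1 invr1 -[1 + 1]/(2%:R : L) (pcharf0 hcL).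
  have := H z z1.
  rewrite root_mup // mup_prodQ // -ey -mu_prod_XsubC -root_mup // => /(_ ry).
  by [].
move=> H z z1 rz.
have z0 : z != 0.
  by apply: contraTneq rz => ->; rewrite /root prodQ_at0 oner_eq0.
have y0 : z + z^-1 != 0.
  apply/eqP => e.
  have : z^-1 = - z by apply/eqP; rewrite -addr_eq0 addrC e.
  rewrite (oppr_pchar2 hcL) => e2; move: (@inv_neq _ hcL z z0 z1); rewrite e2 eqxx.
  by [].
rewrite mup_prodQ // -mu_prod_XsubC; apply: H => //.
by rewrite root_mup // mu_prod_XsubC -mup_prodQ // -root_mup.
Qed.
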